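(* Let $n>24$, $0<\epsilon<\frac13$, and let $m$ be a positive integer with load factor $L=\frac mn>\epsilon^{-2}$. Then $$\mathsf P\left\{\left|\sum_{i=1}^n \frac{k_i(x)(k_i(x)-1)}{m(m-1)}\cdot\frac{1}{\|p\|^2}-1\right|\le 22\,\epsilon\right\}\ \ge\ 1-\frac{10}{9}e^{-L\epsilon^2}.$$
   Context: Standing setup: $U$ is a finite set (the key space) with a probability measure $q$; $T=\{1,\dots,n\}$; $h:U\to T$ is an arbitrary function. $p_i=\sum_{u\in h^{-1}(i)}q(u)$ and $\|p\|^2=\sum_{i=1}^n p_i^2$. $U^m$ carries the product measure $q^m$, and $\mathsf P$ denotes probability under $q^m$ of the event for $x=(x_1,\dots,x_m)\in U^m$. $k_i(x)=|\{j: h(x_j)=i\}|$. *)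

(* Defs.v *)
From HB Require Import structures.
From mathcomp Require Import all_boot all_order all_algebra.
From mathcomp Require Import reals.
From mathcomp Require Import sequences exp.
Set Implicit Arguments. Unset Strict Implicit. Unset Printing Implicit Defensive.
Import Order.TTheory GRing.Theory Num.Theory.
Local Open Scope ring_scope.

Definition pmass (R : realType) (U : finType) (n : nat) (q : U -> R)
  (h : U -> 'I_n) (i : 'I_n) : R := \sum_(u : U | h u == i) q u.

Definition normp2 (R : realType) (U : finType) (n : nat) (q : U -> R)
  (h : U -> 'I_n) : R := \sum_(i < n) (pmass q h i) ^+ 2.

Definition kcount (U : finType) (n m : nat) (h : U -> 'I_n)
  (x : {ffun 'I_m -> U}) (i : 'I_n) : nat := #|[set j : 'I_m | h (x j) == i]|.

Definition Prob (R : realType) (U : finType) (q : U -> R) (m : nat)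
  (E : pred {ffun 'I_m -> U}) : R :=
  \sum_(x : {ffun 'I_m -> U} | E x) \prod_(j < m) q (x j).

(* Main.v *)
Require Import Defs.
From HB Require Import structures.
From mathcomp Require Import all_boot all_order all_algebra.
From mathcomp Require Import reals.
From mathcomp Require Import sequences exp.
From mathcomp Require Import fingroup perm.
From mathcomp Require Import ring lra zify.
Set Implicit Arguments. Unset Strict Implicit. Unset Printing Implicit Defensive.
Import Order.TTheory GRing.Theory Num.Theory.
Local Open Scope ring_scope.

Section Meas.
Variables (R : realType) (U : finType) (q : U -> R).
Hypotheses (hq0 : forall u, 0 <= q u) (hq1 : \sum_(u : U) q u = 1).
Variable N : nat.
Local Notation X := {ffun 'I_N -> U}.

Definition w (x : X) : R := \prod_(j < N) q (x j).
Definition Ex (F : X -> R) : R := \sum_(x : X) w x * F x.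

Lemma w_ge0 x : 0 <= w x.
Proof. by apply: prodr_ge0 => j _. Qed.

Lemma Ex_prod (f : 'I_N -> U -> R) :
  Ex (fun x => \prod_(j < N) f j (x j)) = \prod_(j < N) \sum_(u : U) q u * f j u.
Proof.
rewrite bigA_distr_bigA /Ex; apply: eq_bigr => x _.
by rewrite /w -big_split.
Qed.

Lemma Ex1 : Ex (fun=> 1) = 1.
Proof.
rewrite /Ex; under eq_bigr do rewrite mulr1.
rewrite /w -(bigA_distr_bigA (fun (j : 'I_N) (u : U) => q u)) /=.
by rewrite big1 // => j _; exact: hq1.
Qed.

Lemma Ex_marg i (phi : U -> R) : Ex (fun x => phi (x i)) = \sum_(u : U) q u * phi u.
Proof.
have E1 : \prod_(j < N | j != i) \sum_(u : U) q u * (if j == i then phi u else 1) = 1.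
  by apply: big1 => j /negbTE ->; under eq_bigr do rewrite mulr1; exact: hq1.
have := Ex_prod (fun j u => if j == i then phi u else 1).
rewrite (bigD1 i) //= eqxx E1 mulr1 => <-; apply: eq_bigr => x _; congr (_ * _).
by rewrite (bigD1 i) //= eqxx big1 ?mulr1 // => j /negbTE ->.
Qed.

Lemma Ex_lin a b F G : Ex (fun x => a * F x + b * G x) = a * Ex F + b * Ex G.
Proof. by rewrite /Ex !mulr_sumr -big_split; apply: eq_bigr => x _ /=; ring. Qed.

Lemma Ex_le F G : (forall x, F x <= G x) -> Ex F <= Ex G.
Proof. by move=> H; apply: ler_sum => x _; apply: ler_wpM2l; [exact: w_ge0|]. Qed.

Lemma sum_w : \sum_(x : X) w x = 1.
Proof. by rewrite -Ex1 /Ex; under [RHS]eq_bigr do rewrite mulr1. Qed.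

Definition merge (A : {set 'I_N}) (x y : X) : X := [ffun i => if i \in A then x i else y i].

Lemma Ex_indep (A : {set 'I_N}) (F G : X -> R) :
  (forall x y : X, (forall i, i \in A -> x i = y i) -> F x = F y) ->
  (forall x y : X, (forall i, i \notin A -> x i = y i) -> G x = G y) ->
  Ex (fun x => F x * G x) = Ex F * Ex G.
Proof.
move=> HF HG.
pose mm (p : X * X) : X * X := (merge A p.1 p.2, merge A p.2 p.1).
have mmK : involutive mm.
  case=> x y; rewrite /mm /=; congr (_, _); apply/ffunP => i; rewrite !ffunE;
  by case: (i \in A).
have key : Ex F * Ex G = \sum_(p : X * X) w p.1 * w p.2 * (F p.1 * G p.2).
  rewrite /Ex mulr_suml; under eq_bigr do rewrite mulr_sumr.
  rewrite pair_big /=; apply: eq_bigr => [[x y]] _ /=; ring.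
rewrite key (reindex_inj (can_inj mmK)) /=.
transitivity (\sum_(p : X * X) w p.1 * w p.2 * (F p.1 * G p.1)).
  have -> : \sum_(p : X * X) w p.1 * w p.2 * (F p.1 * G p.1) =
     \sum_(x : X) \sum_(y : X) w x * w y * (F x * G x) by rewrite pair_big.
  rewrite /Ex; apply: eq_bigr => x _; rewrite -[LHS]mulr1 -sum_w mulr_sumr.
  by apply: eq_bigr => y _; ring.
apply: eq_bigr => [[x y]] _ /=.
rewrite (HF (merge A x y) x); last by move=> i iA; rewrite ffunE iA.
rewrite (HG (merge A y x) x); last by move=> i iA; rewrite ffunE (negbTE iA).
congr (_ * _); rewrite /w -!big_split /=; apply: eq_bigr => j _; rewrite !ffunE.
by case: (j \in A) => //; ring.
Qed.

Lemma Ex_sum (I : finType) (f : I -> X -> R) :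
  Ex (fun x => \sum_(t : I) f t x) = \sum_(t : I) Ex (f t).
Proof. by rewrite /Ex; under eq_bigr do rewrite mulr_sumr; rewrite exchange_big. Qed.

Lemma Ex_affine c F : Ex (fun x => 1 + c * F x) = 1 + c * Ex F.
Proof.
rewrite /Ex; under eq_bigr do rewrite mulrDr mulr1.
by rewrite big_split /= sum_w mulr_sumr; congr (_ + _); apply: eq_bigr => x _; ring.
Qed.

Variables (n : nat) (h : U -> 'I_n).

Definition Z (x : X) (i j : 'I_N) : R := (h (x i) == h (x j))%:R.

Lemma Z_sum x i j : Z x i j = \sum_(t < n) (h (x i) == t)%:R * (h (x j) == t)%:R.
Proof.
rewrite /Z (bigD1 (h (x i))) //= eqxx mul1r big1 ?addr0; first by rewrite eq_sym.
by move=> t /negbTE ht; rewrite eq_sym ht mul0r.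
Qed.

Lemma Ex_Z i j : i != j -> Ex (fun x => Z x i j) = normp2 q h.
Proof.
move=> ij; under [LHS]eq_bigr do rewrite Z_sum.
rewrite -/(Ex _) Ex_sum /normp2; apply: eq_bigr => t _.
rewrite (@Ex_indep [set i] (fun x => (h (x i) == t)%:R) (fun x => (h (x j) == t)%:R)).
- rewrite (Ex_marg i (fun u => (h u == t)%:R)) (Ex_marg j (fun u => (h u == t)%:R)) expr2 /pmass; congr (_ * _); rewrite [RHS]big_mkcond /=;
  by apply: eq_bigr => u _; case: (h u == t); rewrite ?mulr1 ?mulr0.
- by move=> x y H; rewrite H // inE.
- by move=> x y H; rewrite H // inE eq_sym.
Qed.

Lemma expR_Z mu x i j : expR (mu * Z x i j) = 1 + (expR mu - 1) * Z x i j.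
Proof.
rewrite /Z; case: (h (x i) == h (x j)); rewrite ?mulr1 ?mulr0 ?expR0; ring.
Qed.

Lemma Ex_ext F G : (forall x, F x = G x) -> Ex F = Ex G.
Proof. by move=> H; apply: eq_bigr => x _; rewrite H. Qed.

Lemma Ex_pairs (a b : nat -> 'I_N) mu k :
  (forall r, (r < k)%N -> val (a r) = (2 * r)%N /\ val (b r) = (2 * r).+1) ->
  Ex (fun x => expR (mu * \sum_(r < k) Z x (a r) (b r))) =
  (1 + (expR mu - 1) * normp2 q h) ^+ k.
Proof.
move=> Hab.
rewrite (@Ex_ext _ (fun x => \prod_(r < k) expR (mu * Z x (a r) (b r)))); last first.
  by move=> x; rewrite mulr_sumr expR_sum.
elim: k Hab => [|k IH] Hab.
  by rewrite (@Ex_ext _ (fun _ => 1)) ?Ex1 ?expr0 // => x; rewrite big_ord0.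
rewrite (@Ex_ext _ (fun x => (\prod_(r < k) expR (mu * Z x (a r) (b r))) *
            expR (mu * Z x (a k) (b k)))); last by move=> x; rewrite big_ord_recr.
rewrite (@Ex_indep [set i : 'I_N | (val i < 2 * k)%N]
   (fun x => \prod_(r < k) expR (mu * Z x (a r) (b r)))
   (fun x => expR (mu * Z x (a k) (b k)))).
- rewrite exprS [RHS]mulrC; congr (_ * _).
    apply: IH => r rk; apply: Hab; exact: ltnW.
  rewrite (@Ex_ext _ (fun x => 1 + (expR mu - 1) * Z x (a k) (b k))); last first.
    by move=> x; rewrite expR_Z.
  rewrite Ex_affine Ex_Z //.
  have [ha hb] := Hab k (ltnSn k).
  by apply/eqP => e; move: ha hb; rewrite e => ->; lia.
- move=> x y H; apply: eq_bigr => r _.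
  have [ha hb] := Hab r (leqW (ltn_ord r)); have rk := ltn_ord r.
  by rewrite /Z (H (a r)) ?(H (b r)) // inE ?ha ?hb; lia.
- move=> x y H; have [ha hb] := Hab k (ltnSn k).
  by rewrite /Z (H (a k)) ?(H (b k)) // inE ?ha ?hb; lia.
Qed.


Definition permx (s : {perm 'I_N}) (x : X) : X := [ffun j => x (s j)].

Lemma Ex_perm s G : Ex (fun x => G (permx s x)) = Ex G.
Proof.
have inj : injective (permx s).
  move=> x y e; apply/ffunP => j.
  have := congr1 (fun f : X => f ((s^-1)%g j)) e; by rewrite /permx !ffunE permKV.
rewrite /Ex [RHS](reindex_inj inj); apply: eq_bigr => x _; congr (_ * _).
rewrite /w /permx [LHS](reindex_inj (@perm_inj _ s)) /=; apply: eq_bigr => j _.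
by rewrite ffunE.
Qed.

Lemma Ex_scale c F : Ex (fun x => c * F x) = c * Ex F.
Proof. by rewrite /Ex mulr_sumr; apply: eq_bigr => x _; ring. Qed.

Lemma jensen_exp (I : finType) (y : I -> R) : (0 < #|I|)%N ->
  expR ((#|I|%:R)^-1 * \sum_i y i) <= (#|I|%:R)^-1 * \sum_i expR (y i).
Proof.
move=> I0; set c : R := #|I|%:R; set yb := c^-1 * \sum_i y i.
have cpos : 0 < c by rewrite /c ltr0n.
have H : forall i, expR yb * (1 + (y i - yb)) <= expR (y i).
  move=> i; have -> : expR (y i) = expR yb * expR (y i - yb).
    by rewrite -expRD; congr expR; ring.
  by apply: ler_wpM2l; [exact: expR_ge0| exact: expR_ge1Dx].
have := @ler_sum _ I (index_enum I) xpredT _ _ (fun i _ => H i).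
have -> : \sum_(i : I) expR yb * (1 + (y i - yb)) = expR yb * c.
  rewrite -mulr_sumr big_split /= sumrB sumr_const.
  rewrite sumr_const -mulr_natl -/c /yb; congr (_ * _); field; exact: lt0r_neq0.
by move=> Hle; rewrite ler_pdivlMl // mulrC.
Qed.

Definition T x (i j : 'I_N) := \sum_(s : {perm 'I_N}) Z x (s i) (s j).
Definition D x := \sum_(i : 'I_N) \sum_(j : 'I_N) (i != j)%:R * Z x i j.

Lemma perm_exists (i j i' j' : 'I_N) : i != j -> i' != j' ->
  exists s : {perm 'I_N}, s i' = i /\ s j' = j.
Proof.
move=> ij ij'; pose s1 := tperm i' i; pose j1 := s1 j'.
have j1i : j1 != i.
  by rewrite /j1 -[X in _ != X](tpermL i' i) -/s1 (inj_eq (@perm_inj _ s1)) eq_sym.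
exists (s1 * tperm j1 j)%g; rewrite !permM /= tpermL; split => //.
by rewrite tpermD // eq_sym.
exact: tpermL.
Qed.

Lemma T_const x i j i' j' : i != j -> i' != j' -> T x i j = T x i' j'.
Proof.
move=> ij ij'; have [s [h1 h2]] := perm_exists ij ij'.
rewrite /T [RHS](reindex_inj (mulgI s)); apply: eq_bigr => r _.
by rewrite !permM h1 h2.
Qed.

Lemma sum_pairs_T x :
  \sum_(i : 'I_N) \sum_(j : 'I_N) (i != j)%:R * T x i j = #|{perm 'I_N}|%:R * D x.
Proof.
rewrite /T; under eq_bigr do under eq_bigr do rewrite mulr_sumr.
under eq_bigr do rewrite exchange_big; rewrite exchange_big /=.
have E : forall s : {perm 'I_N},
    \sum_(i : 'I_N) \sum_(j : 'I_N) (i != j)%:R * Z x (s i) (s j) = D x.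
  move=> s; rewrite /D [RHS](reindex_inj (@perm_inj _ s)); apply: eq_bigr => i _.
  rewrite [RHS](reindex_inj (@perm_inj _ s)); apply: eq_bigr => j _.
  by rewrite (inj_eq (@perm_inj _ s)).
under eq_bigr do rewrite E.
by rewrite sumr_const mulr_natl.
Qed.

Lemma sum_ne (c : R) :
  \sum_(i : 'I_N) \sum_(j : 'I_N) (i != j)%:R * c = (N%:R * (N%:R - 1)) * c.
Proof.
have E : forall i : 'I_N, \sum_(j : 'I_N) (i != j)%:R * c = (N%:R - 1) * c.
  move=> i; rewrite -mulr_suml; congr (_ * _).
  rewrite (eq_bigr (fun j => 1 - (i == j)%:R)); last by move=> j _; case: (i == j); rewrite ?subr0 ?subrr.
  rewrite sumrB sumr_const card_ord (bigD1 i) //= eqxx big1 ?addr0 //.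
  by move=> j /negbTE; rewrite eq_sym => ->.
under eq_bigr do rewrite E.
by rewrite sumr_const card_ord -mulr_natl; ring.
Qed.

End Meas.

Section Main.
Variables (R : realType) (U : finType) (q : U -> R).
Hypotheses (hq0 : forall u, 0 <= q u) (hq1 : \sum_(u : U) q u = 1).
Variables (n : nat) (h : U -> 'I_n) (N : nat).
Local Notation X := {ffun 'I_N -> U}.

Lemma kc (x : X) t : (kcount h x t)%:R = \sum_(j < N) (h (x j) == t)%:R :> R.
Proof.
rewrite /kcount -sum1_card natr_sum big_mkcond /=; apply: eq_bigr => j _.
by rewrite inE; case: (h (x j) == t).
Qed.

Lemma D_kcount (x : X) :
  D R h x = \sum_(t < n) (kcount h x t)%:R * ((kcount h x t)%:R - 1).
Proof.
have E1 : D R h x = \sum_(i < N) \sum_(j < N) Z R h x i j - \sum_(i < N) (1 : R).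
  rewrite /D -sumrB; apply: eq_bigr => i _.
  rewrite [in RHS](bigD1 i) //= [in LHS](bigD1 i) //= eqxx mul0r add0r /Z eqxx.
  have -> : \sum_(j < N | j != i) (i != j)%:R * (h (x i) == h (x j))%:R =
            \sum_(j < N | j != i) (h (x i) == h (x j))%:R :> R.
    by apply: eq_bigr => j ji; rewrite eq_sym ji mul1r.
  by rewrite addrC addrK.
have E2 : \sum_(i < N) \sum_(j < N) Z R h x i j = \sum_(t < n) (kcount h x t)%:R ^+ 2.
  under eq_bigr do under eq_bigr do rewrite Z_sum.
  under eq_bigr do rewrite exchange_big; rewrite exchange_big /=.
  apply: eq_bigr => t _; rewrite expr2 !kc big_distrlr /=.
  done.
have E3 : \sum_(i < N) (1 : R) = \sum_(t < n) (kcount h x t)%:R.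
  under [RHS]eq_bigr do rewrite kc; rewrite exchange_big /=.
  apply: eq_bigr => j _; rewrite (bigD1 (h (x j))) //= eqxx big1 ?addr0 //.
  by move=> t /negbTE; rewrite eq_sym => ->.
rewrite E1 E2 E3 -sumrB; apply: eq_bigr => t _; ring.
Qed.


Lemma mgf_U (a b : nat -> 'I_N) k mu : (0 < k)%N -> (1 < N)%N ->
  (forall r, (r < k)%N -> val (a r) = (2 * r)%N /\ val (b r) = (2 * r).+1) ->
  Ex q (fun x : X => expR (mu * k%:R * (D R h x / (N%:R * (N%:R - 1))))) <=
  (1 + (expR mu - 1) * normp2 q h) ^+ k.
Proof.
move=> k0 N1 Hab.
set P := #|{perm 'I_N}|.
have P0 : (0 < P)%N by rewrite /P card_Sn fact_gt0.
have abne : forall r, (r < k)%N -> a r != b r.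
  move=> r rk; have [ha hb] := Hab r rk; apply/eqP => e.
  by move: ha hb; rewrite e => ->; lia.
have a0b0 := abne 0%N k0.
have NN : (N%:R * (N%:R - 1) : R) != 0.
  apply: mulf_neq0; first by rewrite pnatr_eq0; lia.
  by rewrite subr_eq0 pnatr_eq1; lia.
have PP : (P%:R : R) != 0 by rewrite pnatr_eq0; lia.
have key : forall x : X, mu * k%:R * (D R h x / (N%:R * (N%:R - 1))) =
    (P%:R)^-1 * \sum_(s : {perm 'I_N}) (mu * \sum_(r < k) Z R h x (s (a r)) (s (b r))).
  move=> x.
  have T0 : N%:R * (N%:R - 1) * T R h x (a 0%N) (b 0%N) = P%:R * D R h x.
    rewrite -sum_pairs_T -sum_ne; apply: eq_bigr => i _; apply: eq_bigr => j _.
    have [ij|ij] := boolP (i != j); last first.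
      by rewrite /= mulr0n !mul0r.
    by rewrite (T_const R h x ij a0b0).
  have S : \sum_(s : {perm 'I_N}) \sum_(r < k) Z R h x (s (a r)) (s (b r)) =
      k%:R * T R h x (a 0%N) (b 0%N).
    rewrite exchange_big /= (eq_bigr (fun _ => T R h x (a 0%N) (b 0%N))).
      by rewrite sumr_const card_ord mulr_natl.
    by move=> r _; apply: T_const; [exact: abne|].
  rewrite -mulr_sumr S.
  have -> : T R h x (a 0%N) (b 0%N) = P%:R * D R h x / (N%:R * (N%:R - 1)).
    apply: (mulfI NN); rewrite T0 [RHS]mulrC divfK //.
  move: PP NN; set pr := (P%:R : R); set M := (N%:R * (N%:R - 1) : R) => PP NN.
  by field; rewrite ?PP ?NN.
have HL : Ex q (fun x : X => expR (mu * k%:R * (D R h x / (N%:R * (N%:R - 1))))) <=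
   Ex q (fun x => (P%:R)^-1 *
   \sum_(s : {perm 'I_N}) expR (mu * \sum_(r < k) Z R h x (s (a r)) (s (b r)))).
  apply: (@Ex_le R U q hq0 N) => x; rewrite key; exact: jensen_exp.
apply: le_trans HL _.
rewrite Ex_scale Ex_sum.
have E : forall s : {perm 'I_N},
    Ex q (fun x => expR (mu * \sum_(r < k) Z R h x (s (a r)) (s (b r)))) =
    (1 + (expR mu - 1) * normp2 q h) ^+ k.
  move=> s; rewrite -(Ex_pairs hq1 h mu Hab) -[RHS](Ex_perm q s); apply: Ex_ext => x.
  by congr expR; congr (_ * _); apply: eq_bigr => r _; rewrite /Z /permx !ffunE.
under eq_bigr do rewrite E.
rewrite sumr_const -[X in _ * X]mulr_natl.
by rewrite mulKf.
Qed.

End Main.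

Lemma expR_quad (R : realType) (y : R) : y <= 2^-1 -> expR y <= 1 + y + 2 * y ^+ 2.
Proof.
move=> hy.
have h1 : 1 - y <= expR (- y) by exact: expR_ge1Dx (- y).
have h2 : expR y * expR (- y) = 1 := expRxMexpNx_1 y.
have e0 : 0 < expR y := expR_gt0 y.
have h4 : 0 <= y ^+ 2 * (1 - 2 * y) by apply: mulr_ge0; [exact: sqr_ge0| lra].
nra.
Qed.

Lemma pow_exp (R : realType) (y : R) k : 0 <= 1 + y -> (1 + y) ^+ k <= expR (k%:R * y).
Proof.
move=> hy; rewrite expRM_natl; apply: lerXn2r; rewrite ?nnegrE ?expR_ge0 //.
by have := expR_ge1Dx y.
Qed.

Lemma exp_m1 (R : realType) : expR (-1) <= 2^-1 :> R.
Proof.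
have h1 : 2 <= expR (1 : R) by have := expR_ge1Dx (1 : R); lra.
have h2 := expRxMexpNx_1 (1 : R).
have h3 : 0 < expR (-1 : R) := expR_gt0 _.
nra.
Qed.


Lemma half_facts M : (1 < M.+1)%N ->
  [/\ (0 < M.+1./2)%N, (M.+1 <= (M.+1./2 * 2).+1)%N &
      (forall r, (r < M.+1./2)%N -> ((2 * r).+1 < M.+1)%N)].
Proof.
move=> M1; have hk := odd_double_half M.+1; rewrite -muln2 in hk.
have ho : (odd M.+1 <= 1)%N by case: (odd _).
move: (M.+1./2) hk => k hk.
split; [lia | lia | move=> r rk; lia].
Qed.

Theorem corollary2 (R : realType) (U : finType) (q : U -> R)
  (hq0 : forall u, 0 <= q u) (hq1 : \sum_(u : U) q u = 1)
  (n : nat) (h : U -> 'I_n) (eps : R) (m : nat)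
  (hn : (24 < n)%N) (he0 : 0 < eps) (he1 : eps < 3^-1) (hm : (0 < m)%N)
  (hL : eps ^- 2 < m%:R / n%:R) :
  1 - (10 / 9) * expR (- ((m%:R / n%:R) * eps ^+ 2))
  <= Prob q (fun x : {ffun 'I_m -> U} =>
       `| \sum_(i < n)
            ((kcount h x i)%:R * ((kcount h x i)%:R - 1)) / (m%:R * (m%:R - 1))
            / normp2 q h - 1 | <= 22 * eps).
Proof.
case: m hm hL => [//|M] _ hL.
have nR25 : 25 <= n%:R :> R by rewrite ler_nat.
have nR0 : 0 < n%:R :> R by lra.
have pm : forall t, pmass q h t = \sum_u q u * (h u == t)%:R.
  move=> t; rewrite /pmass big_mkcond /=; apply: eq_bigr => u _.
  by case: (h u == t); rewrite ?mulr1 ?mulr0.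
have p0 : forall t, 0 <= pmass q h t by move=> t; apply: sumr_ge0 => u _; exact: hq0.
have sump : \sum_(t < n) pmass q h t = 1.
  under eq_bigr do rewrite pm.
  rewrite exchange_big /= -[RHS]hq1; apply: eq_bigr => u _.
  rewrite (bigD1 (h u)) //= eqxx mulr1 big1 ?addr0 // => t /negbTE.
  by rewrite eq_sym => ->; rewrite mulr0.
have p1 : forall t, pmass q h t <= 1.
  move=> t; rewrite -sump (bigD1 t) //= lerDl; apply: sumr_ge0 => ? _; exact: p0.
have s1 : normp2 q h <= 1.
  rewrite /normp2 -sump; apply: ler_sum => t _; rewrite expr2.
  by have := p0 t; have := p1 t; nra.
have sn : 1 <= n%:R * normp2 q h.
  have H0 : 0 <= \sum_(t < n) (pmass q h t - (n%:R)^-1) ^+ 2.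
    by apply: sumr_ge0 => t _; exact: sqr_ge0.
  have E : forall t, (pmass q h t - (n%:R)^-1) ^+ 2 =
     pmass q h t ^+ 2 - (2 * (n%:R)^-1) * pmass q h t + (n%:R)^-1 ^+ 2 :> R.
    by move=> t; ring.
  rewrite (eq_bigr _ (fun t _ => E t)) big_split /= sumrB -mulr_sumr sump sumr_const card_ord in H0.
  rewrite -/(normp2 q h) -mulr_natl in H0.
  have hi : n%:R * (n%:R)^-1 = 1 :> R by rewrite mulfV // gt_eqF.
  nra.
have s0 : 0 < normp2 q h by nra.
have e2 : 0 < eps ^+ 2 by rewrite exprn_gt0.
have hL' : 1 < eps ^+ 2 * (M.+1%:R / n%:R).
  have hx : 0 < eps ^+ 2 * (M.+1%:R / n%:R - eps ^- 2) by apply: mulr_gt0 => //; rewrite subr_gt0.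
  have hv : eps ^+ 2 * eps ^- 2 = 1 by rewrite mulfV // gt_eqF.
  by rewrite mulrBr hv in hx; lra.
have e2l : eps ^+ 2 < 9^-1 by have := he0; nra.
have Lpos : 0 < M.+1%:R / n%:R :> R by rewrite divr_gt0 // ltr0n.
have L9 : 9 < M.+1%:R / n%:R :> R by nra.
have mRe : M.+1%:R = (M.+1%:R / n%:R) * n%:R :> R by rewrite divfK // gt_eqF.
have mR2 : 2 <= M.+1%:R :> R by nra.
have M1 : (1 < M.+1)%N by move: mR2; rewrite ler_nat.
have [k0 k2 k3] := half_facts M1.
set k := (M.+1)./2 in k0 k2 k3 *.
have kR : M.+1%:R - 1 <= 2 * k%:R :> R.
  have : (M.+1%:R : R) <= (k * 2).+1%:R by rewrite ler_nat.
  rewrite -[(k * 2).+1]addn1 natrD natrM; lra.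
pose a (r : nat) : 'I_M.+1 := inord (2 * r).
pose b (r : nat) : 'I_M.+1 := inord (2 * r).+1.
have Hab : forall r, (r < k)%N -> val (a r) = (2 * r)%N /\ val (b r) = (2 * r).+1.
  move=> r rk; have h3 := k3 r rk.
  by split; rewrite /a /b /= inordK //; exact: ltn_trans (ltnSn _) h3.
set delta := 22 * eps.
set mu := delta / 16.
pose Ux (x : {ffun 'I_M.+1 -> U}) := D R h x / (M.+1%:R * (M.+1%:R - 1)).
have Uform : forall x : {ffun 'I_M.+1 -> U}, \sum_(i < n)
            ((kcount h x i)%:R * ((kcount h x i)%:R - 1)) / (M.+1%:R * (M.+1%:R - 1))
            / normp2 q h = Ux x / normp2 q h.
  by move=> x; rewrite /Ux -!mulr_suml D_kcount.
rewrite /Prob.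
under eq_bigl => x do rewrite Uform.
pose E (x : {ffun 'I_M.+1 -> U}) := `|Ux x / normp2 q h - 1| <= delta.
have tot := sum_w hq1 M.+1.
have splitE : \sum_(x | E x) \prod_(j < M.+1) q (x j) =
    1 - \sum_(x | ~~ E x) \prod_(j < M.+1) q (x j).
  by have := tot; rewrite /w (bigID E) /= => T1; lra.
change (1 - 10 / 9 * expR (- (M.+1%:R / n%:R * eps ^+ 2)) <= \sum_(x | E x) \prod_(j < M.+1) q (x j)).
rewrite splitE.
have mu0 : 0 < mu by rewrite /mu /delta; lra.
have mu2 : mu <= 2^-1 by rewrite /mu /delta; lra.
have kR0 : 0 <= k%:R :> R by [].
set s := normp2 q h in s0 s1 sn Uform *.
pose c1 := mu * k%:R * s * (1 + delta).
pose c2 := mu * k%:R * s * (1 - delta).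
pose F x := expR (- c1) * expR (mu * k%:R * Ux x) + expR c2 * expR (- mu * k%:R * Ux x).
have F0 : forall x, 0 <= F x.
  by move=> x; rewrite /F; apply: addr_ge0; apply: mulr_ge0; exact: expR_ge0.
have F1 : forall x, ~~ E x -> 1 <= F x.
  move=> x; rewrite /E -ltNge ltr_normr => /orP [] hx.
  - have hx' : 1 + delta < Ux x / s by lra.
    rewrite ltr_pdivlMr // in hx'.
    have t0 : 0 <= mu * k%:R * Ux x - c1.
      rewrite (_ : mu * k%:R * Ux x - c1 = (mu * k%:R) * (Ux x - (1 + delta) * s)); last first.
        by rewrite /c1; ring.
      apply: mulr_ge0; [apply: mulr_ge0 => //; exact: ltW | lra].
    have g1 : 1 <= expR (- c1) * expR (mu * k%:R * Ux x).
      by rewrite -expRD; have := expR_ge1Dx (- c1 + mu * k%:R * Ux x); lra.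
    have g2 : 0 <= expR c2 * expR (- mu * k%:R * Ux x) by apply: mulr_ge0; exact: expR_ge0.
    rewrite /F; lra.
  - have hx' : Ux x / s < 1 - delta by lra.
    rewrite ltr_pdivrMr // in hx'.
    have t0 : 0 <= c2 - mu * k%:R * Ux x.
      rewrite (_ : c2 - mu * k%:R * Ux x = (mu * k%:R) * ((1 - delta) * s - Ux x)); last first.
        by rewrite /c2; ring.
      apply: mulr_ge0; [apply: mulr_ge0 => //; exact: ltW | lra].
    have g1 : 1 <= expR c2 * expR (- mu * k%:R * Ux x).
      rewrite -expRD; have := expR_ge1Dx (c2 + - mu * k%:R * Ux x).
      rewrite (_ : c2 + - mu * k%:R * Ux x = c2 - mu * k%:R * Ux x); last by ring.
      lra.
    have g2 : 0 <= expR (- c1) * expR (mu * k%:R * Ux x) by apply: mulr_ge0; exact: expR_ge0.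
    rewrite /F; lra.
have bad1 : \sum_(x | ~~ E x) \prod_(j < M.+1) q (x j) <= Ex q F.
  apply: (@le_trans _ _ (\sum_(x | ~~ E x) w q x * F x)).
    apply: ler_sum => x nE.
    by have := ler_wpM2l (w_ge0 hq0 x) (F1 x nE); rewrite mulr1.
  rewrite /Ex [X in _ <= X](bigID (fun x => ~~ E x)) /= lerDl.
  by apply: sumr_ge0 => x _; apply: mulr_ge0; [exact: w_ge0 | exact: F0].
have bad2 : Ex q F = expR (- c1) * Ex q (fun x => expR (mu * k%:R * Ux x)) +
                     expR c2 * Ex q (fun x => expR (- mu * k%:R * Ux x)).
  exact: (Ex_lin q (expR (- c1)) (expR c2) (fun x => expR (mu * k%:R * Ux x))
             (fun x => expR (- mu * k%:R * Ux x))).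
have m1 : Ex q (fun x => expR (mu * k%:R * Ux x)) <= (1 + (expR mu - 1) * s) ^+ k :=
  mgf_U hq0 hq1 h mu k0 M1 Hab.
have m2 : Ex q (fun x => expR (- mu * k%:R * Ux x)) <= (1 + (expR (- mu) - 1) * s) ^+ k :=
  mgf_U hq0 hq1 h (- mu) k0 M1 Hab.
have em0 := expR_gt0 mu.
have em1 := expR_gt0 (- mu).
have b1 : (1 + (expR mu - 1) * s) ^+ k <= expR (k%:R * ((expR mu - 1) * s)).
  by apply: pow_exp; nra.
have b2 : (1 + (expR (- mu) - 1) * s) ^+ k <= expR (k%:R * ((expR (- mu) - 1) * s)).
  by apply: pow_exp; nra.
have q1 : expR mu <= 1 + mu + 2 * mu ^+ 2 := expR_quad mu2.
have q2 : expR (- mu) <= 1 + - mu + 2 * mu ^+ 2.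
  by rewrite -(sqrrN mu); apply: expR_quad; lra.
pose X := k%:R * s * (mu * delta - 2 * mu ^+ 2).
have ks0 : 0 <= k%:R * s by apply: mulr_ge0 => //; exact: ltW.
have ex1 : - c1 + k%:R * ((expR mu - 1) * s) <= - X.
  have := ler_wpM2l ks0 (_ : expR mu - 1 <= mu + 2 * mu ^+ 2); rewrite /c1 /X; nra.
have ex2 : c2 + k%:R * ((expR (- mu) - 1) * s) <= - X.
  have := ler_wpM2l ks0 (_ : expR (- mu) - 1 <= - mu + 2 * mu ^+ 2); rewrite /c2 /X; nra.
have T1 : expR (- c1) * Ex q (fun x => expR (mu * k%:R * Ux x)) <= expR (- X).
  apply: le_trans (ler_wpM2l (expR_ge0 _) (le_trans m1 b1)) _.
  by rewrite -expRD ler_expR.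
have T2 : expR c2 * Ex q (fun x => expR (- mu * k%:R * Ux x)) <= expR (- X).
  apply: le_trans (ler_wpM2l (expR_ge0 _) (le_trans m2 b2)) _.
  by rewrite -expRD ler_expR.
have XL : M.+1%:R / n%:R * eps ^+ 2 + 1 <= X.
  have hmu : mu * delta - 2 * mu ^+ 2 = 847 / 32 * eps ^+ 2 by rewrite /mu /delta; field.
  have h1 : eps ^+ 2 * k%:R <= eps ^+ 2 * (k%:R * (n%:R * s)).
    apply: ler_wpM2l; first exact: ltW.
    by rewrite -{1}[k%:R]mulr1; apply: ler_wpM2l.
  have h2 : eps ^+ 2 * (M.+1%:R - 1) <= eps ^+ 2 * (2 * k%:R).
    by apply: ler_wpM2l => //; exact: ltW.
  have h3 : n%:R < eps ^+ 2 * (M.+1%:R / n%:R) * n%:R.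
    by rewrite -[X in X < _]mul1r ltr_pM2r.
  have h4 : n%:R * X = 847 / 32 * (eps ^+ 2 * (k%:R * (n%:R * s))).
    by rewrite /X hmu; ring.
  rewrite mRe in h2.
  have h5 : n%:R * (M.+1%:R / n%:R * eps ^+ 2 + 1) <= n%:R * X.
    rewrite h4; lra.
  by rewrite ler_pM2l in h5.
have fin : expR (- X) <= expR (- (M.+1%:R / n%:R * eps ^+ 2)) * 2^-1.
  apply: (@le_trans _ _ (expR (- (M.+1%:R / n%:R * eps ^+ 2) + - 1))).
    by rewrite ler_expR; lra.
  by rewrite expRD; apply: ler_wpM2l; [exact: expR_ge0 | exact: exp_m1].
have E0 := expR_ge0 (- (M.+1%:R / n%:R * eps ^+ 2)).
rewrite bad2 in bad1.
lra.
Qed.
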